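(* Let $\widehat{\Gamma}$ be a Harnack graph with controlled, uniformly lazy weights $(\pi,\mu)$. Let $K$ be a set of vertices of $\widehat{\Gamma}$ and $\Gamma:=\widehat{\Gamma}\setminus K$ (so $\partial\Gamma\subseteq K$). For $x\in\widehat{\Gamma}$ and $r>0$ set $B_{\partial\Gamma}(x,r)=B_{\widehat\Gamma}(x,r)\cap\partial\Gamma$, $V_{\partial\Gamma}(x,r)=\pi(B_{\partial\Gamma}(x,r))$, and for $x\in\Gamma$ set \[W(x,r):=\frac{V_{\widehat\Gamma}(x,r)}{V_{\partial\Gamma}(x,r)}.\] Then there is a constant $C$ such that, with $d_x:=d(x,K)$, \[\psi_K(x)\le \sum_{n\ge d_x^2}\frac{C}{W(x,\sqrt n)}\qquad\text{for all } x\in\Gamma\setminus\partial_I\Gamma.\]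
   Context: $\widehat{\Gamma}=(\widehat V,\widehat E)$ is an infinite simple connected graph with symmetric edge weights $\mu_{xy}=\mu_{yx}$, $\mu_{xy}\ne0$ iff $x\sim y$, vertex weights $\pi>0$ with $\sum_{y\sim x}\mu_{xy}\le\pi(x)$; Markov kernel $\mathcal{K}(x,y)=\mu_{xy}/\pi(x)$ ($x\neq y$), $\mathcal{K}(x,x)=1-\sum_{z\sim x}\mu_{xz}/\pi(x)$. Controlled weights: $\exists C_c>1$ with $\mu_{xy}/\pi(x)\ge1/C_c$ for all $y\sim x$. Uniformly lazy: $\exists C_e\in(0,1)$ with $\mathcal{K}(x,x)\ge C_e$ for all $x$. $d$ is the graph distance of $\widehat\Gamma$, $B_{\widehat\Gamma}(x,r)=\{y:d(x,y)\le r\}$, $V_{\widehat\Gamma}(x,r)=\pi(B_{\widehat\Gamma}(x,r))$. The heat kernel is $p(n,x,y)=\mathcal{K}^n(x,y)/\pi(y)$. $\widehat\Gamma$ is a Harnack graph if there are constants $c_1,c_2,c_3,c_4>0$ with $\frac{c_1}{V(x,\sqrt n)}e^{-d(x,y)^2/(c_2n)}\le p(n,x,y)\le\frac{c_3}{V(x,\sqrt n)}e^{-d(x,y)^2/(c_4 n)}$ for all $x,y$ and $n\ge d(x,y)$ (equivalently, volume doubling plus a Poincaré inequality). $\Gamma$ is the subgraph induced on $\widehat V\setminus K$; $\partial\Gamma$ is the set of vertices outside $\Gamma$ adjacent to $\Gamma$, and $\partial_I\Gamma$ the set of vertices of $\Gamma$ adjacent to a vertex outside $\Gamma$. $\psi_K(x)=\mathbb{P}^x(\tau_K<\infty)$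 where $\tau_K=\min\{n\ge0:X_n\in K\}$ for the random walk $(X_n)$ driven by $\mathcal{K}$. When $V_{\partial\Gamma}(x,r)=0$, $1/W(x,r)=0$. *)

(* Defs.v *)
From HB Require Import structures.
From mathcomp Require Import all_boot all_order all_algebra.
From mathcomp Require Import all_classical all_reals all_analysis.
Set Implicit Arguments. Unset Strict Implicit. Unset Printing Implicit Defensive.
Import Order.TTheory GRing.Theory Num.Theory.
Local Open Scope classical_set_scope.
Local Open Scope ring_scope.

Section WeightedGraph.
Variables (R : realType) (V : choiceType).
Variables (adj : V -> V -> Prop) (mu : V -> V -> R) (pi : V -> R).

Definition nbr_sum (x : V) : \bar R := \esum_(y in [set y | adj x y]) (mu x y)%:E.

Definition Kker (x y : V) : R :=
  if x == y then 1 - fine (nbr_sum x) / pi x else mu x y / pi x.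

Fixpoint Kpow (n : nat) (x y : V) : \bar R :=
  match n with
  | 0 => ((x == y)%:R)%:E
  | n'.+1 => \esum_(z in [set: V]) (Kpow n' x z * (Kker z y)%:E)%E
  end.

Definition heat (n : nat) (x y : V) : R := fine (Kpow n x y) / pi y.

Definition reach (x y : V) (n : nat) : Prop :=
  exists p : nat -> V, [/\ p 0%N = x, p n = y & forall i, (i < n)%N -> adj (p i) (p i.+1)].

Definition connected_graph : Prop := forall x y, exists n, reach x y n.

Definition gdist (x y : V) : nat :=
  xget 0%N [set n | reach x y n /\ forall m, reach x y m -> (n <= m)%N].

Definition gball (x : V) (r : R) : set V := [set y | (gdist x y)%:R <= r].
Definition vol (A : set V) : \bar R := \esum_(y in A) (pi y)%:E.
Definition Vball (x : V) (r : R) : R := fine (vol (gball x r)).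

Definition harnack_graph : Prop :=
  exists c1 c2 c3 c4 : R, [/\ 0 < c1, 0 < c2, 0 < c3, 0 < c4 &
    forall (n : nat) (x y : V), (gdist x y <= n)%N ->
      c1 / Vball x (Num.sqrt n%:R) * expR (- ((gdist x y)%:R ^+ 2) / (c2 * n%:R))
        <= heat n x y /\
      heat n x y <=
      c3 / Vball x (Num.sqrt n%:R) * expR (- ((gdist x y)%:R ^+ 2) / (c4 * n%:R))].

Definition weighted_graph : Prop :=
  ~ finite_set [set: V] /\
  (forall x, ~ adj x x) /\
  (forall x y, adj x y -> adj y x) /\
  connected_graph /\
  (forall x y, mu x y = mu y x) /\
  (forall x y, mu x y != 0 <-> adj x y) /\
  (forall x, 0 < pi x) /\
  (forall x, (nbr_sum x <= (pi x)%:E)%E).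

Definition controlled_weights : Prop :=
  exists Cc : R, 1 < Cc /\ forall x y, adj x y -> 1 / Cc <= mu x y / pi x.

Definition uniformly_lazy : Prop :=
  exists Ce : R, [/\ 0 < Ce, Ce < 1 & forall x, Ce <= Kker x x].

Variable K : set V.

(** exterior boundary of Gamma = V \ K and interior boundary *)
Definition dGamma : set V := [set y | K y /\ exists z, ~ K z /\ adj y z].
Definition dIGamma : set V := [set z | ~ K z /\ exists y, K y /\ adj z y].

Definition distK (x : V) : nat :=
  xget 0%N [set n | (exists k, K k /\ gdist x k = n) /\ forall k, K k -> (n <= gdist x k)%N].

(** P^x(tau_K <= n): sum over paths X_0 = x, ..., X_n visiting K *)
Definition hit_within (n : nat) (x : V) : \bar R :=
  \esum_(p in [set p : n.+1.-tuple V | tnth p ord0 = x /\ exists i, K (tnth p i)])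
    (\prod_(i < n) Kker (tnth p (inord i)) (tnth p (inord i.+1)))%:E.

(** psi_K(x) = P^x(tau_K < oo) *)
Definition psiK (x : V) : \bar R := ereal_sup (range (fun n => hit_within n x)).

(** 1/W(x,r) = V_{dGamma}(x,r) / V(x,r)  (equal to 0 when V_{dGamma}(x,r) = 0) *)
Definition invW (x : V) (r : R) : R :=
  fine (vol (gball x r `&` dGamma)) / Vball x r.

End WeightedGraph.

(* Main.v *)
Require Import Defs.
From HB Require Import structures.
From mathcomp Require Import all_boot all_order all_algebra.
From mathcomp Require Import all_classical all_reals all_analysis.
From mathcomp Require Import zify.
Import Order.TTheory GRing.Theory Num.Theory.
Local Open Scope classical_set_scope.
Local Open Scope ring_scope.

Section esum_help.
Variables (R : realType).
Local Open Scope ereal_scope.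

Lemma esum_le_subset (T : choiceType) (A B : set T) (a : T -> \bar R) :
  A `<=` B -> (forall i, B i -> 0 <= a i) ->
  \esum_(i in A) a i <= \esum_(i in B) a i.
Proof.
move=> AB a0; rewrite esum_mkcond [leRHS]esum_mkcond; apply: le_esum => i _.
case: ifPn => [/set_mem/AB Bi|_]; first by rewrite ifT ?inE.
by case: ifPn => // /set_mem /a0.
Qed.

Lemma esum_ge1 (T : choiceType) (S : set T) (a : T -> \bar R) x :
  S x -> (forall i, S i -> 0 <= a i) -> a x <= \esum_(i in S) a i.
Proof.
move=> Sx a0; rewrite -(@esum_set1 _ _ x a (a0 _ Sx)); apply: esum_le_subset => //.
by move=> y ->.
Qed.

Lemma esumZl (T : choiceType) (S : set T) (a : T -> \bar R) (c : R) :
  (0 <= c)%R -> (forall i, S i -> 0 <= a i) ->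
  \esum_(i in S) (c%:E * a i) = c%:E * \esum_(i in S) a i.
Proof.
move=> c0 a0; rewrite esum_mkcond [in RHS]esum_mkcond.
set b := fun i => if i \in S then a i else 0.
have b0 : forall i, 0 <= b i.
  by move=> i; rewrite /b; case: ifPn => // /set_mem /a0.
rewrite (eq_esum (b := fun i => c%:E * b i)); last first.
  by move=> i _; rewrite /b; case: ifPn => //; rewrite mule0.
rewrite /esum -ereal_supZl//; last first.
  by apply/set0P; exists 0; exists set0; [exact: fsets_set0|rewrite fsbig_set0].
congr ereal_sup; apply/seteqP; split => x /=.
  move=> [A hA <-].
  by exists (\sum_(i \in A) b i); [exists A|rewrite ge0_mule_fsumr].
by move=> [y [B hB <-] <-]; exists B => //; rewrite ge0_mule_fsumr.
Qed.

Lemma esumZr (T : choiceType) (S : set T) (a : T -> \bar R) (c : R) :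
  (0 <= c)%R -> (forall i, S i -> 0 <= a i) ->
  \esum_(i in S) (a i * c%:E) = (\esum_(i in S) a i) * c%:E.
Proof.
move=> c0 a0; rewrite muleC -esumZl//; apply: eq_esum => i _; exact: muleC.
Qed.

Lemma esum_swap (T1 T2 : choiceType) (I : set T1) (J : set T2)
    (a : T1 -> T2 -> \bar R) :
  (forall i j, I i -> J j -> 0 <= a i j) ->
  \esum_(i in I) \esum_(j in J) a i j = \esum_(j in J) \esum_(i in I) a i j.
Proof.
move=> a0; rewrite (esum_esum (J := fun=> J))//.
rewrite (esum_esum (I := J) (J := fun=> I)); last by move=> i j Ji Ij; exact: a0.
rewrite (reindex_esum (J `*`` fun=> I) (I `*`` fun=> J) (fun x => (x.2, x.1)))//.
split.
- by move=> [i j] [/= ? ?]; split.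
- by move=> [i1 i2] [j1 j2] /= _ _ [] -> ->.
- by move=> [i j] [/= Ii Jj]; exists (j, i).
Qed.

End esum_help.

Set Implicit Arguments. Unset Strict Implicit.


Section Kernel.
Variables (R : realType) (V : choiceType) (adj : V -> V -> Prop)
  (mu : V -> V -> R) (pi : V -> R).
Hypothesis hw : weighted_graph adj mu pi.
Hypothesis hc : controlled_weights adj mu pi.
Hypothesis hl : uniformly_lazy adj mu pi.
Local Notation Kk := (Kker adj mu pi).
Local Notation Kp := (Kpow adj mu pi).

Lemma piv_gt0 x : 0 < pi x.
Proof. by case: hw => _ [_ [_ [_ [_ [_ [hp _]]]]]]. Qed.

Lemma adj_sym x y : adj x y -> adj y x.
Proof. by case: hw => _ [_ [hs _]]; apply: hs. Qed.

Lemma adj_irr x : ~ adj x x.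
Proof. by case: hw => _ [hi _]; apply: hi. Qed.

Lemma mu_eq0 x y : ~ adj x y -> mu x y = 0.
Proof.
case: hw => _ [_ [_ [_ [_ [hm _]]]]] nxy; apply/eqP; apply: contrapT => /negP.
by move/(hm x y).
Qed.

Lemma mu_adj x y : mu x y != 0 -> adj x y.
Proof. by case: hw => _ [_ [_ [_ [_ [hm _]]]]] /(hm x y). Qed.

Lemma mu_ge0 x y : 0 <= mu x y.
Proof.
have [axy|naxy] := pselect (adj x y); last by rewrite mu_eq0.
case: hc => Cc [Cc1 hC]; have := hC _ _ axy.
have Cc0 : 0 < Cc by rewrite (lt_trans ltr01).
have h1 : 0 < 1 / Cc by rewrite divr_gt0.
move=> /(lt_le_trans h1); rewrite pmulr_lgt0 ?invr_gt0 ?piv_gt0// => /ltW//.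
Qed.

Lemma nbr_ge0 x : (0 <= nbr_sum adj mu x)%E.
Proof. by apply: esum_ge0 => y _; rewrite lee_fin mu_ge0. Qed.

Lemma nbr_le x : (nbr_sum adj mu x <= (pi x)%:E)%E.
Proof. by case: hw => _ [_ [_ [_ [_ [_ [_ hn]]]]]]. Qed.

Lemma nbr_fin x : nbr_sum adj mu x = (fine (nbr_sum adj mu x))%:E.
Proof.
rewrite fineK// fin_numE; apply/andP; split.
  by apply/eqP => h; have := nbr_ge0 x; rewrite h.
by apply/eqP => h; have := nbr_le x; rewrite h leye_eq.
Qed.

Lemma Kk_ge0 x y : 0 <= Kk x y.
Proof.
rewrite /Kker; case: eqP => [->|_].
  case: hl => Ce [Ce0 _ hC]; have := hC y; rewrite /Kker eqxx => h.
  exact: le_trans (ltW Ce0) h.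
by rewrite divr_ge0 ?mu_ge0 ?(ltW (piv_gt0 _)).
Qed.

Lemma Kk_diag_gt0 x : 0 < Kk x x.
Proof.
case: hl => Ce [Ce0 _ hC]; exact: lt_le_trans Ce0 (hC x).
Qed.

Lemma Kk_off x y : x != y -> Kk x y = mu x y / pi x.
Proof. by rewrite /Kker => /negPf ->. Qed.

Lemma Kk_row x : (\esum_(y in [set: V]) (Kk x y)%:E <= 1)%E.
Proof.
rewrite (esumID [set x]); last by move=> i _; rewrite lee_fin Kk_ge0.
rewrite setTI (@esum_set1 _ _ x (fun y => (Kk x y)%:E)) ?lee_fin ?Kk_ge0//.
rewrite setTI.
have -> : (\esum_(y in ~` [set x]) (Kk x y)%:E =
    \esum_(y in ~` [set x]) ((pi x)^-1%:E * (mu x y)%:E))%E.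
  apply: eq_esum => y /= /eqP; rewrite eq_sym => /Kk_off ->.
  by rewrite -EFinM mulrC.
rewrite esumZl ?invr_ge0 ?(ltW (piv_gt0 _)); last by move=> i _; rewrite lee_fin mu_ge0.
have hle : (\esum_(y in ~` [set x]) (mu x y)%:E <= nbr_sum adj mu x)%E.
  rewrite (esumID [set y | adj x y]); last by move=> i _; rewrite lee_fin mu_ge0.
  rewrite [X in (_ + X)%E]esum1 ?adde0; last first.
    by move=> i [_ /= /mu_eq0 ->].
  apply: esum_le_subset; first by move=> i [].
  by move=> i _; rewrite lee_fin mu_ge0.
have := nbr_le x; rewrite nbr_fin in hle * => hp.
apply: (@le_trans _ _ ((Kk x x)%:E + (pi x)^-1%:E * (fine (nbr_sum adj mu x))%:E))%E.
  apply: leeD2l; apply: lee_wpmul2l => //.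
  by rewrite lee_fin invr_ge0 ltW ?piv_gt0.
rewrite /Kker eqxx -EFinM -EFinD lee_fin.
by rewrite mulrC subrK.
all: by [].
Qed.

End Kernel.


Section KPow.
Variables (R : realType) (V : choiceType) (adj : V -> V -> Prop)
  (mu : V -> V -> R) (pi : V -> R).
Hypothesis hw : weighted_graph adj mu pi.
Hypothesis hc : controlled_weights adj mu pi.
Hypothesis hl : uniformly_lazy adj mu pi.
Local Notation Kk := (Kker adj mu pi).
Local Notation Kp := (Kpow adj mu pi).

Lemma Kp_ge0 n x y : (0 <= Kp n x y)%E.
Proof.
elim: n y => [|n IH] y /=; first by rewrite lee_fin; case: eqP.
apply: esum_ge0 => z _; apply: mule_ge0 => //; rewrite lee_fin Kk_ge0//.
Qed.

Lemma Kp_row n x : (\esum_(y in [set: V]) Kp n x y <= 1)%E.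
Proof.
elim: n => [|n IH] /=.
  rewrite (esumID [set x]); last by move=> i _; rewrite lee_fin; case: eqP.
  rewrite setTI (@esum_set1 _ _ x (fun y => ((x == y)%:R)%:E)) ?eqxx//.
  rewrite esum1 ?adde0// => y [_ /= /eqP]; rewrite eq_sym => /negPf ->//.
rewrite esum_swap; last by move=> i j _ _; apply: mule_ge0; rewrite ?Kp_ge0 ?lee_fin ?Kk_ge0.
apply: le_trans (IH); apply: le_esum => z _.
have hz : (Kp n x z <= 1)%E.
  apply: le_trans (IH); apply: (@esum_ge1 _ _ _ (fun y => Kp n x y)) => // *.
  exact: Kp_ge0.
have hf : Kp n x z = (fine (Kp n x z))%:E.
  rewrite fineK// fin_numE; apply/andP; split.
    by apply/eqP => h; have := Kp_ge0 n x z; rewrite h.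
  by apply/eqP => h; move: hz; rewrite h leye_eq.
rewrite hf esumZl; last by move=> *; rewrite lee_fin Kk_ge0.
  by rewrite -[leRHS]mule1; apply: lee_wpmul2l; [rewrite -hf Kp_ge0|apply: Kk_row].
by rewrite -lee_fin -hf Kp_ge0.
Qed.

Lemma Kp_le1 n x y : (Kp n x y <= 1)%E.
Proof.
apply: le_trans (Kp_row n x); apply: (@esum_ge1 _ _ _ (fun y => Kp n x y)) => // *.
exact: Kp_ge0.
Qed.

Lemma Kp_fin n x y : Kp n x y = (fine (Kp n x y))%:E.
Proof.
rewrite fineK// fin_numE; apply/andP; split.
  by apply/eqP => h; have := Kp_ge0 n x y; rewrite h.
by apply/eqP => h; have := Kp_le1 n x y; rewrite h leye_eq.
Qed.

Lemma Kp_fine_ge0 n x y : 0 <= fine (Kp n x y).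
Proof. by rewrite -lee_fin -Kp_fin Kp_ge0. Qed.

Lemma Kp_diag_gt0 n x : 0 < fine (Kp n x x).
Proof.
elim: n => [|n IH]; first by rewrite /= eqxx ltr01.
rewrite -lte_fin -Kp_fin /=.
apply: (@lt_le_trans _ _ (Kp n x x * (Kk x x)%:E)%E).
  by rewrite Kp_fin -EFinM lte_fin mulr_gt0 ?Kk_diag_gt0.
apply: (@esum_ge1 _ _ _ (fun z => Kp n x z * (Kk z x)%:E)%E) => // i _.
by apply: mule_ge0; rewrite ?Kp_ge0 ?lee_fin ?Kk_ge0.
Qed.

Lemma reach_refl x : reach adj x x 0.
Proof. by exists (fun=> x). Qed.

Lemma reach_snoc x z y m : reach adj x z m -> adj z y -> reach adj x y m.+1.
Proof.
move=> [p [p0 pm hp]] azy.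
exists (fun i => if (i <= m)%N then p i else y); split.
- by rewrite leq0n.
- by rewrite ltnn.
- move=> i hi; rewrite ltnS in hi; have [->|im] := eqVneq i m.
    by rewrite leqnn ltnn pm.
  have lim : (i < m)%N by rewrite ltn_neqAle im hi.
  by rewrite hi lim; apply: hp.
Qed.

Lemma Kp_supp n x y : Kp n x y != 0%E -> exists m, (m <= n)%N /\ reach adj x y m.
Proof.
elim: n y => [|n IH] y /=.
  move=> h; have xy : x = y by apply/eqP; apply: contraNT h => /negPf ->.
  by subst; exists 0%N; split => //; exact: reach_refl.
move=> hne.
have [z hz] : exists z, (Kp n x z * (Kk z y)%:E)%E != 0%E.
  apply: contrapT => hall; move: hne; rewrite esum1 ?eqxx// => z _.
  by apply/eqP; apply: contrapT => hz; apply: hall; exists z; apply/negP.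
have hK : Kp n x z != 0%E by apply: contra hz => /eqP ->; rewrite mul0e.
have [m [mn rm]] := IH z hK.
have [<-|zy] := eqVneq z y; first by exists m; split => //; rewrite ltnW.
have ha : adj z y.
  apply: (@mu_adj _ _ _ _ _ hw); apply: contra hz; rewrite Kk_off// => /eqP ->.
  by rewrite mul0r mule0.
by exists m.+1; split; [|exact: reach_snoc rm ha].
Qed.

End KPow.


Lemma nat_le_sqrt (R : realType) (g k : nat) :
  ((g%:R : R) <= Num.sqrt (k%:R)) = (g * g <= k)%N.
Proof.
rewrite -[g%:R]ger0_norm// -sqrtr_sqr ler_sqrt// -natrX ler_nat.
by rewrite expnS expn1.
Qed.

Section Dist.
Variables (R : realType) (V : choiceType) (adj : V -> V -> Prop)
  (mu : V -> V -> R) (pi : V -> R).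
Hypothesis hw : weighted_graph adj mu pi.

Lemma conn : connected_graph adj.
Proof. by case: hw => _ [_ [_ [hc _]]]. Qed.

Lemma gdist_spec x y : reach adj x y (gdist adj x y) /\
  forall m, reach adj x y m -> (gdist adj x y <= m)%N.
Proof.
have ex : exists n, `[< reach adj x y n >].
  by have [n rn] := conn x y; exists n; apply/asboolP.
case: (ex_minnP ex) => n /asboolP rn hmin.
rewrite /gdist; apply: (xgetPex 0%N (P := [set n | reach adj x y n /\
   forall m, reach adj x y m -> (n <= m)%N])).
by exists n; split => // m /asboolP /hmin.
Qed.

Lemma gdist_le x y m : reach adj x y m -> (gdist adj x y <= m)%N.
Proof. by case: (gdist_spec x y) => _; apply. Qed.

Lemma gdist_refl x : gdist adj x x = 0%N.
Proof. by apply/eqP; rewrite -leqn0; apply: gdist_le; exact: reach_refl. Qed.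

Lemma distK_le (K : set V) x k : K k -> (distK adj K x <= gdist adj x k)%N.
Proof.
move=> Kk.
have ex : exists n, `[< exists k, K k /\ gdist adj x k = n >].
  by exists (gdist adj x k); apply/asboolP; exists k.
case: (ex_minnP ex) => n /asboolP hn hmin.
have := (xgetPex 0%N (P := [set n | (exists k, K k /\ gdist adj x k = n) /\
   forall k, K k -> (n <= gdist adj x k)%N])).
rewrite /distK; case.
  exists n; split => // k' Kk'; apply: hmin; apply/asboolP; by exists k'.
by move=> _; apply.
Qed.

End Dist.


Lemma fine_neq0E (R : realType) (e : \bar R) : fine e != 0 -> e = (fine e)%:E.
Proof. case: e => //= [|]; rewrite eqxx //. Qed.

Section Vol.
Variables (R : realType) (V : choiceType) (adj : V -> V -> Prop)
  (mu : V -> V -> R) (pi : V -> R).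
Hypothesis hw : weighted_graph adj mu pi.
Hypothesis hc : controlled_weights adj mu pi.
Hypothesis hl : uniformly_lazy adj mu pi.
Hypothesis hh : harnack_graph adj mu pi.
Local Notation Kk := (Kker adj mu pi).
Local Notation Kp := (Kpow adj mu pi).
Local Notation Vb := (Vball adj pi).
Local Notation Gb := (@gball R V adj).

Lemma Kp_heat n x y : fine (Kp n x y) = heat adj mu pi n x y * pi y.
Proof. by rewrite /heat divfK// gt_eqF// (piv_gt0 hw). Qed.

Lemma vol_ge0 (A : set V) : (0 <= vol pi A)%E.
Proof. by apply: esum_ge0 => y _; rewrite lee_fin ltW// (piv_gt0 hw). Qed.

Lemma Vb_pos x n : 0 < Vb x (Num.sqrt n%:R) /\
  vol pi (Gb x (Num.sqrt n%:R)) = (Vb x (Num.sqrt n%:R))%:E.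
Proof.
case: hh => c1 [c2 [c3 [c4 [_ _ _ _ h]]]].
have g0 : (gdist adj x x <= n)%N by rewrite (gdist_refl hw x).
have [_ hup] := h n x x g0.
have hpos : 0 < heat adj mu pi n x x.
  by rewrite /heat divr_gt0 ?(piv_gt0 hw) ?(Kp_diag_gt0 hw hc hl).
have hne : Vb x (Num.sqrt n%:R) != 0.
  apply/negP => /eqP h0; move: hup; rewrite h0 invr0 mulr0 mul0r => hle.
  by have := lt_le_trans hpos hle; rewrite ltxx.
have he := fine_neq0E hne.
split => //; rewrite lt_neqAle eq_sym hne /=.
by rewrite /Vball -lee_fin -he vol_ge0.
Qed.

Lemma doubling : exists D : R, 0 < D /\ forall x n, (2 <= n)%N ->
  Vb x (Num.sqrt (4 * n)%N%:R) <= D * Vb x (Num.sqrt n%:R).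
Proof.
case: hh => c1 [c2 [c3 [c4 [c10 c20 _ _ h]]]].
exists (expR (4 / c2) / c1); split; first by rewrite divr_gt0 ?expR_gt0.
move=> x n n2.
have [V1pos _] := Vb_pos x n.
set V1 := Vb x (Num.sqrt n%:R) in V1pos *.
set c := c1 * expR (- (4 / c2)) / V1.
have cpos : 0 < c by rewrite /c !mulr_gt0 ?expR_gt0 ?invr_gt0.
have hball : forall y, Gb x (Num.sqrt (4 * n)%N%:R) y ->
    (c * pi y <= fine (Kp n x y))%R.
  move=> y; rewrite /gball /= nat_le_sqrt => hg.
  have gn : (gdist adj x y <= n)%N.
    move: hg n2; set g := gdist adj x y; clear; move=> hg n2.
    rewrite leqNgt; apply/negP => ng.
    have : (n.+1 * n.+1 <= 4 * n)%N by apply: leq_trans hg; apply: leq_mul.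
    by rewrite leqNgt; apply/negP/negPn; nia.
  have [hlo _] := h n x y gn.
  rewrite Kp_heat ler_pM2r ?(piv_gt0 hw)//; apply: le_trans hlo.
  rewrite /c mulrAC ler_pM2l ?divr_gt0// ler_expR mulNr lerN2.
  have n0 : (0 < n%:R :> R) by rewrite ltr0n (leq_trans _ n2).
  rewrite ler_pdivrMr ?mulr_gt0// mulrA divfK ?gt_eqF//.
  by rewrite -natrX -natrM ler_nat expnS expn1.
have hv : (c%:E * vol pi (Gb x (Num.sqrt (4 * n)%N%:R)) <= 1)%E.
  rewrite -(@esumZl _ _ _ (fun y => (pi y)%:E) c (ltW cpos)); last by move=> y _; rewrite lee_fin ltW ?(piv_gt0 hw).
  apply: le_trans (Kp_row hw hc hl n x).
  apply: (@le_trans _ _ (\esum_(y in Gb x (Num.sqrt (4 * n)%N%:R)) Kp n x y)%E).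
    apply: le_esum => y hy; rewrite (Kp_fin hw hc hl) -EFinM lee_fin; exact: hball.
  apply: esum_le_subset => // *; exact: Kp_ge0 hw hc hl _ _ _.
have [_ he] := Vb_pos x (4 * n)%N.
move: hv; rewrite he -EFinM lee_fin -ler_pdivlMl// => hv.
apply: le_trans hv _; rewrite /c !invfM invrK expRN invrK.
by rewrite mulr1 (mulrC (c1^-1)).
Qed.

End Vol.


Section GenEsum.
Variables (R : realType).
Local Open Scope ereal_scope.

Lemma esum_group (T1 T2 : choiceType) (S : set T1) (h : T1 -> T2)
    (g : T1 -> \bar R) :
  (forall t, S t -> 0 <= g t) ->
  \esum_(t in S) g t =
  \esum_(w in [set: T2]) \esum_(t in [set t | S t /\ h t = w]) g t.
Proof.
move=> g0; rewrite (esum_esum (I := [set: T2])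
  (J := fun w => [set t | S t /\ h t = w]) (a := fun _ t => g t)); last first.
  by move=> i j _ [Sj _]; exact: g0.
rewrite (reindex_esum ([set: T2] `*`` fun w => [set t | S t /\ h t = w]) S
   (fun k => k.2))//.
split.
- by move=> [w t] [_ /= []].
- by move=> [w1 t1] [w2 t2] /set_mem [_ /= [_ e1]] /set_mem [_ /= [_ e2]] /= et; subst.
- by move=> t St; exists (h t, t).
Qed.

Lemma esum_rcons (V : choiceType) (n : nat) (P : seq V -> Prop)
    (f : seq V -> \bar R) :
  (forall s, 0 <= f s) ->
  \esum_(s in [set s | size s = n.+1 /\ P s]) f s =
  \esum_(t in [set t : seq V | size t = n])
     \esum_(z in [set z | P (rcons t z)]) f (rcons t z).
Proof.
move=> f0; rewrite (esum_esum (I := [set t : seq V | size t = n])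
  (J := fun t => [set z | P (rcons t z)]) (a := fun t z => f (rcons t z))); last first.
  by move=> *; exact: f0.
rewrite (reindex_esum ([set t : seq V | size t = n] `*`` fun t => [set z | P (rcons t z)])
   [set s | size s = n.+1 /\ P s] (fun k => rcons k.1 k.2))//.
split.
- by move=> [t z] [/= st Pz]; rewrite size_rcons st.
- move=> [t1 z1] [t2 z2] _ _ /= e.
  have := congr1 (@rev V) e; rewrite !rev_rcons => -[-> /(congr1 (@rev V))].
  by rewrite !revK => ->.
- move=> s [ss Ps]; move: ss Ps; case/lastP: s => [//|t z].
  by rewrite size_rcons => -[st] Ps; exists (t, z).
Qed.

End GenEsum.

Section Paths.
Variables (R : realType) (V : choiceType) (adj : V -> V -> Prop)
  (mu : V -> V -> R) (pi : V -> R).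
Hypothesis hw : weighted_graph adj mu pi.
Hypothesis hc : controlled_weights adj mu pi.
Hypothesis hl : uniformly_lazy adj mu pi.
Local Notation Kk := (Kker adj mu pi).
Local Notation Kp := (Kpow adj mu pi).

Fixpoint wseq (a : V) (s : seq V) : R :=
  if s is b :: t then Kk a b * wseq b t else 1.

Lemma wseq_ge0 a s : 0 <= wseq a s.
Proof.
elim: s a => [|b t IH] a /=; first exact: ler01.
by rewrite mulr_ge0 ?(Kk_ge0 hw hc hl).
Qed.

Lemma wseq_rcons a s z : wseq a (rcons s z) = wseq a s * Kk (last a s) z.
Proof.
elim: s a => [|b t IH] a /=; first by rewrite mulr1 mul1r.
by rewrite IH mulrA.
Qed.

Lemma prod_wseq_nth a s d :
  \prod_(i < size s) Kk (nth d (a :: s) i) (nth d (a :: s) i.+1) = wseq a s.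
Proof.
elim: s a => [|b t IH] a /=; first by rewrite big_ord0.
by rewrite big_ord_recl /= IH.
Qed.

Lemma prod_wseq n (p : n.+1.-tuple V) :
  \prod_(i < n) Kk (tnth p (inord i)) (tnth p (inord i.+1)) =
  wseq (tnth p ord0) (behead p).
Proof.
have sp : size (behead p) = n by rewrite size_behead size_tuple.
have ep : val p = tnth p ord0 :: behead p by rewrite {1}(tuple_eta p).
rewrite -(prod_wseq_nth (tnth p ord0) (behead p) (tnth p ord0)) sp -ep.
apply: eq_bigr => i _; set d := tnth p ord0.
rewrite [tnth p (inord i)](tnth_nth d) [tnth p (inord i.+1)](tnth_nth d).
by rewrite !inordK// ltnS// ltnW.
Qed.

Lemma Kp_path n a y :
  (\esum_(s in [set s : seq V | size s = n /\ last a s = y]) (wseq a s)%:E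
     <= Kp n a y)%E.
Proof.
elim: n a y => [|n IH] a y.
  have [<-|ay] := eqVneq a y.
    rewrite (_ : [set s : seq V | _] = [set [::]]).
      by rewrite esum_set1 ?lee_fin ?eqxx.
    by apply/seteqP; split => [s [/size0nil ->]|s ->].
  rewrite esum1 ?Kp_ge0// => s [/size0nil -> /= e].
  by move: ay; rewrite e eqxx.
rewrite (@esum_rcons _ _ n (fun s => last a s = y) (fun s => (wseq a s)%:E)); last first.
  by move=> s; rewrite lee_fin wseq_ge0.
have step : forall t, size t = n ->
  (\esum_(z in [set z | last a (rcons t z) = y]) (wseq a (rcons t z))%:E
    = (wseq a t * Kk (last a t) y)%:E)%E.
  move=> t _; rewrite (_ : [set z | _] = [set y]).
    by rewrite esum_set1 ?wseq_rcons// lee_fin mulr_ge0 ?wseq_ge0 ?(Kk_ge0 hw hc hl).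
  by apply/seteqP; split => z /=; rewrite last_rcons.
rewrite (eq_esum step).
rewrite (esum_group (fun t => last a t)); last first.
  by move=> t _; rewrite lee_fin mulr_ge0 ?wseq_ge0 ?(Kk_ge0 hw hc hl).
rewrite /=; apply: le_esum => w _.
have -> : (\esum_(t in [set t : seq V | size t = n /\ last a t = w])
      (wseq a t * Kk (last a t) y)%:E =
    \esum_(t in [set t : seq V | size t = n /\ last a t = w])
      ((wseq a t)%:E * (Kk w y)%:E))%E.
  by apply: eq_esum => t [_ ->]; rewrite EFinM.
rewrite esumZr ?(Kk_ge0 hw hc hl)//; last by move=> *; rewrite lee_fin wseq_ge0.
apply: lee_wpmul2r; first by rewrite lee_fin (Kk_ge0 hw hc hl).
exact: IH.
Qed.

Lemma Kp_step n a y :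
  (\esum_(t in [set t : seq V | size t = n]) (wseq a t * Kk (last a t) y)%:E
     <= Kp n.+1 a y)%E.
Proof.
apply: le_trans (Kp_path n.+1 a y).
rewrite (@esum_rcons _ _ n (fun s => last a s = y) (fun s => (wseq a s)%:E)); last first.
  by move=> s; rewrite lee_fin wseq_ge0.
apply: le_esum => t st.
rewrite (_ : [set z | _] = [set y]).
  by rewrite esum_set1 ?wseq_rcons// lee_fin mulr_ge0 ?wseq_ge0 ?(Kk_ge0 hw hc hl).
by apply/seteqP; split => z /=; rewrite last_rcons.
Qed.

End Paths.


Section Hit.
Variables (R : realType) (V : choiceType) (adj : V -> V -> Prop)
  (mu : V -> V -> R) (pi : V -> R).
Hypothesis hw : weighted_graph adj mu pi.
Hypothesis hc : controlled_weights adj mu pi.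
Hypothesis hl : uniformly_lazy adj mu pi.
Local Notation Kk := (Kker adj mu pi).
Local Notation Kp := (Kpow adj mu pi).
Local Notation ws := (wseq adj mu pi).
Variables (K : set V) (x : V).
Hypothesis hxK : ~ K x.

Definition HS n := [set s : seq V | size s = n /\ exists2 y, y \in x :: s & K y].

Lemma hit_seq n : hit_within adj mu pi K n x = (\esum_(s in HS n) (ws x s)%:E)%E.
Proof.
rewrite /hit_within.
rewrite (reindex_esum [set p : n.+1.-tuple V | tnth p ord0 = x /\ exists i, K (tnth p i)]
   (HS n) (fun p => behead p)).
  apply: eq_esum => p [p0 _]; rewrite prod_wseq p0 //.
split.
- move=> p [p0 [i Ki]]; split; first by rewrite size_behead size_tuple.
  exists (tnth p i) => //; rewrite -p0; have := mem_tnth i p.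
  have ep : val p = tnth p ord0 :: behead p by rewrite {1}(tuple_eta p).
  by rewrite -ep.
- move=> p q /set_mem [p0 _] /set_mem [q0 _] /= e.
  have ep : val p = tnth p ord0 :: behead p by rewrite {1}(tuple_eta p).
  have eq : val q = tnth q ord0 :: behead q by rewrite {1}(tuple_eta q).
  by apply: val_inj; rewrite ep eq p0 q0 e.
- move=> s [ss [y ys Ky]].
  have sz : size (x :: s) == n.+1 by rewrite /= ss.
  exists (Tuple sz) => //; split.
    by rewrite (tnth_nth x).
  by have [i ei] := tnthP (Tuple sz) y ys; exists i; rewrite -ei.
Qed.

Local Notation G i := (\esum_(z in dGamma adj K) Kp i x z)%E.

Lemma HS0 : (\esum_(s in HS 0) (ws x s)%:E = 0)%E.
Proof.
apply: esum1 => s [/size0nil -> [y]]; rewrite inE => /eqP ->.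
by move/hxK.
Qed.

Lemma ws_ge0 a s : 0 <= ws a s.
Proof. exact: wseq_ge0 hw hc hl a s. Qed.

Lemma hit_rec n : (\esum_(s in HS n.+1) (ws x s)%:E <=
   \esum_(s in HS n) (ws x s)%:E + G n.+1)%E.
Proof.
set P := fun s : seq V => exists2 y, y \in x :: s & K y.
rewrite /HS (@esum_rcons _ _ n P (fun s => (ws x s)%:E)); last first.
  by move=> s; rewrite lee_fin ws_ge0.
rewrite (esumID [set t | P t]); last first.
  by move=> t _; apply: esum_ge0 => z _; rewrite lee_fin ws_ge0.
apply: leeD.
  apply: (@le_trans _ _ (\esum_(t in [set t : seq V | size t = n] `&` [set t | P t])
      (ws x t)%:E)%E).
    apply: le_esum => t [st Pt].
    apply: (@le_trans _ _ (\esum_(z in [set z | P (rcons t z)]) ((ws x t)%:E * (Kk (last x t) z)%:E))%E).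
      by apply: le_esum => z _; rewrite wseq_rcons EFinM.
    apply: (@le_trans _ _ (\esum_(z in [set: V]) ((ws x t)%:E * (Kk (last x t) z)%:E))%E).
      apply: esum_le_subset => // z _.
      by rewrite -EFinM lee_fin mulr_ge0 ?ws_ge0 ?(Kk_ge0 hw hc hl).
    rewrite esumZl ?ws_ge0//; last by move=> z _; rewrite lee_fin (Kk_ge0 hw hc hl).
    rewrite -[leRHS]mule1; apply: lee_wpmul2l; first by rewrite lee_fin ws_ge0.
    exact: Kk_row hw hc hl _.
  apply: esum_le_subset; first by move=> t [st Pt]; split.
  by move=> t _; rewrite lee_fin ws_ge0.
apply: (@le_trans _ _ (\esum_(t in [set t : seq V | size t = n])
    \esum_(z in dGamma adj K) (ws x t * Kk (last x t) z)%:E)%E); last first.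
  rewrite esum_swap; last by move=> *; rewrite lee_fin mulr_ge0 ?ws_ge0 ?(Kk_ge0 hw hc hl).
  apply: le_esum => z _; exact: Kp_step hw hc hl n x z.
apply: (@le_trans _ _ (\esum_(t in [set t : seq V | size t = n] `&` ~` [set t | P t])
    \esum_(z in dGamma adj K) (ws x t * Kk (last x t) z)%:E)%E); last first.
  apply: esum_le_subset; first by move=> t [].
  by move=> t _; apply: esum_ge0 => z _; rewrite lee_fin mulr_ge0 ?ws_ge0 ?(Kk_ge0 hw hc hl).
apply: le_esum => t [st nPt].
have hlast : ~ K (last x t).
  by move=> Kl; apply: nPt; exists (last x t) => //; exact: mem_last.
rewrite (esumID (dGamma adj K)); last by move=> z _; rewrite lee_fin ws_ge0.
rewrite [X in (_ + X)%E]esum1 ?adde0; last first.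
  move=> z [/= Pz ndz].
  have Kz : K z.
    move: Pz => [y]; rewrite -rcons_cons mem_rcons inE => /orP[/eqP -> //|yt Ky].
    by exfalso; apply: nPt; exists y.
  have lz : last x t != z by apply/eqP => e; apply: hlast; rewrite e.
  rewrite wseq_rcons (Kk_off _ _ _ lz).
  have [m0|mn0] := eqVneq (mu (last x t) z) 0; first by rewrite m0 mul0r mulr0.
  exfalso; apply: ndz; split => //; exists (last x t); split => //.
  exact: adj_sym hw _ _ (mu_adj hw mn0).
apply: (@le_trans _ _ (\esum_(z in [set z | P (rcons t z)] `&` dGamma adj K)
   (ws x t * Kk (last x t) z)%:E)%E).
  by apply: le_esum => z _; rewrite wseq_rcons.
apply: esum_le_subset; first by move=> z [].
by move=> z _; rewrite lee_fin mulr_ge0 ?ws_ge0 ?(Kk_ge0 hw hc hl).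
Qed.

Lemma hit_bound n : (\esum_(s in HS n) (ws x s)%:E <= \sum_(i < n.+1) G i)%E.
Proof.
elim: n => [|n IH].
  rewrite HS0; apply: sume_ge0 => i _; apply: esum_ge0 => z _.
  exact: Kp_ge0 hw hc hl _ _ _.
apply: le_trans (hit_rec n) _; rewrite big_ord_recr /=; exact: leeD2r.
Qed.

End Hit.


Section Main.
Variables (R : realType) (V : choiceType) (adj : V -> V -> Prop)
  (mu : V -> V -> R) (pi : V -> R).
Hypothesis hw : weighted_graph adj mu pi.
Hypothesis hc : controlled_weights adj mu pi.
Hypothesis hl : uniformly_lazy adj mu pi.
Local Notation Kk := (Kker adj mu pi).
Local Notation Kp := (Kpow adj mu pi).
Local Notation Vb := (Vball adj pi).
Local Notation Gb := (@gball R V adj).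
Local Notation sq n := (Num.sqrt (n%:R : R)).
Variables (c3 c4 D : R).
Hypotheses (c3p : 0 < c3) (c4p : 0 < c4) (Dp : 0 < D).
Hypothesis hup : forall n y z, (gdist adj y z <= n)%N ->
  heat adj mu pi n y z <= c3 / Vb y (sq n) * expR (- (gdist adj y z)%:R ^+ 2 / (c4 * n%:R)).
Hypothesis hdbl : forall y n, (2 <= n)%N -> Vb y (sq (4 * n)%N) <= D * Vb y (sq n).
Hypothesis hVb : forall y n, 0 < Vb y (sq n) /\ vol pi (Gb y (sq n)) = (Vb y (sq n))%:E.
Variables (K : set V) (x : V).
Hypotheses (hxK : ~ K x) (hxI : ~ dIGamma adj K x).

Lemma Vb_iter j m : (2 <= m)%N -> Vb x (sq (4 ^ j * m)%N) <= D ^+ j * Vb x (sq m).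
Proof.
move=> m2; elim: j => [|j IH]; first by rewrite expn0 mul1n expr0 mul1r.
rewrite expnS -mulnA exprS -mulrA.
apply: le_trans (hdbl _ _) _.
  by apply: leq_trans m2 _; rewrite leq_pmull// expn_gt0.
by rewrite ler_pM2l.
Qed.

Lemma Kp01 i y : (i <= 1)%N -> K y -> Kp i x y = 0%E.
Proof.
move=> i1 Ky; have xy : x != y by apply/eqP => e; apply: hxK; rewrite e.
case: i i1 => [|[|//]] _ /=; first by rewrite (negPf xy).
apply: esum1 => z _; have [<-|zx] := eqVneq x z.
  rewrite (Kk_off _ _ _ xy).
  have [m0|mn0] := eqVneq (mu x y) 0; first by rewrite m0 mul0r mule0.
  exfalso; apply: hxI; split => //; exists y; split => //.
  have := mu_adj hw mn0; exact.
by rewrite mul0e.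
Qed.

Definition ww (j : nat) : R := if j is j'.+1 then expR (- (4 ^ j')%:R / c4) else 1.
Definition cj j := c3 * ww j * D ^+ j.
Definition Tt j i y : \bar R := ((cj j / Vb x (sq (4 ^ j * i)%N))%:E *
   (if y \in Gb x (sq (4 ^ j * i)%N) then (pi y)%:E else 0))%E.

Lemma ww_gt0 j : 0 < ww j.
Proof. by case: j => [|j] /=; rewrite ?ltr01 ?expR_gt0. Qed.

Lemma cj_gt0 j : 0 < cj j.
Proof. by rewrite /cj !mulr_gt0 ?ww_gt0 ?exprn_gt0. Qed.

Lemma Tt_ge0 j i y : (0 <= Tt j i y)%E.
Proof.
rewrite /Tt; apply: mule_ge0.
  by rewrite lee_fin divr_ge0 ?ltW ?cj_gt0 ?(proj1 (hVb _ _)).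
by case: ifP => _ //; rewrite lee_fin ltW ?(piv_gt0 hw).
Qed.

Lemma inv_le_help (a b e : R) : 0 < a -> 0 < b -> b <= e * a -> a^-1 <= e / b.
Proof.
move=> a0 b0 h; rewrite ler_pdivlMr// mulrC ler_pdivrMr//.
Qed.

Lemma ww_bound g i j : (0 < i)%N -> (forall j', (j' < j)%N -> ~~ (g * g <= 4 ^ j' * i)%N) ->
  expR (- g%:R ^+ 2 / (c4 * i%:R)) <= ww j.
Proof.
move=> i0 hmin; have ci : 0 < c4 * i%:R by rewrite mulr_gt0 ?ltr0n.
case: j hmin => [|j] hmin /=.
  by rewrite expR_le1 mulNr oppr_le0 divr_ge0 ?exprn_ge0 // ltW.
rewrite ler_expR !mulNr lerN2.
have := hmin j (ltnSn j); rewrite -ltnNge => /ltnW h.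
have -> : (4 ^ j)%:R / c4 = (4 ^ j * i)%N%:R / (c4 * i%:R).
  have i0' : (i%:R : R) != 0 by rewrite pnatr_eq0 -lt0n.
  rewrite natrM invfM (mulrC c4^-1) mulrA -(mulrA _ i%:R) divff// mulr1//.
rewrite ler_pM2r ?invr_gt0// -natrX ler_nat.
by rewrite expnS expn1.
Qed.

Lemma Kp_bound i y : dGamma adj K y ->
  (Kp i x y <= \esum_(j in [set: nat]) Tt j i y)%E.
Proof.
move=> [Ky _].
have hge : (0 <= \esum_(j in [set: nat]) Tt j i y)%E.
  by apply: esum_ge0 => j _; exact: Tt_ge0.
case: (leqP i 1) => [i1|i2]; first by rewrite Kp01.
have [k0|kn0] := eqVneq (Kp i x y) 0%E; first by rewrite k0.
have [m [mi rm]] := Kp_supp hw kn0.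
set g := gdist adj x y.
have gi : (g <= i)%N := leq_trans (gdist_le hw rm) mi.
have i0 : (0 < i)%N by apply: leq_trans i2.
have ex : exists j, (g * g <= 4 ^ j * i)%N.
  exists (g * g); apply: (leq_trans (ltnW (ltn_expl (g * g) (isT : (1 < 4)%N)))).
  exact: leq_pmulr.
case: (ex_minnP ex) => j hj hmin.
apply: (le_trans _ (@esum_ge1 _ _ [set: nat] (fun j => Tt j i y) j I (fun j _ => Tt_ge0 j i y))).
have hb : y \in Gb x (sq (4 ^ j * i)%N) by rewrite inE /gball /= nat_le_sqrt.
rewrite /Tt hb (Kp_fin hw hc hl) (Kp_heat hw) -EFinM lee_fin.
rewrite ler_pM2r ?(piv_gt0 hw)//.
apply: le_trans (hup gi) _.
have [Vi0 _] := hVb x i; have [Vj0 _] := hVb x (4 ^ j * i)%N.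
have hm' : forall j', (j' < j)%N -> ~~ (g * g <= 4 ^ j' * i)%N.
  by move=> j' hj'; apply/negP => h; have := hmin _ h; rewrite leqNgt hj'.
have hw' := ww_bound i0 hm'.
apply: (@le_trans _ _ (c3 / Vb x (sq i) * ww j)).
  by rewrite ler_pM2l ?divr_gt0.
rewrite /cj -!mulrA ler_pM2l// mulrC ler_pM2l ?ww_gt0//.
apply: inv_le_help => //; exact: Vb_iter.
Qed.

Lemma geo_eq N : \sum_(j < N) (2^-1 : R) ^+ j + 2 * (2^-1) ^+ N = 2.
Proof.
elim: N => [|N IH]; first by rewrite big_ord0 add0r expr0 mulr1.
rewrite big_ord_recr /= -addrA -[RHS]IH; congr (_ + _).
rewrite exprS mulrA divff ?pnatr_eq0// mul1r.
by rewrite mulr2n mulrDl mul1r.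
Qed.

Lemma geo_le N : \sum_(j < N) (2^-1 : R) ^+ j <= 2.
Proof.
rewrite -{2}(geo_eq N) lerDl mulr_ge0// exprn_ge0// invr_ge0//.
Qed.

Lemma cj_geo : exists A : R, 0 < A /\ forall j, cj j * 2 ^+ j <= A.
Proof.
have [m h4] : exists m : nat, 2 * D <= 4 ^+ m.+1.
  set n := Num.Def.archi_bound (2 * D).
  have hn : 2 * D < n%:R by apply: archi_boundP; rewrite mulr_ge0// ltW.
  exists n; apply: ltW; apply: lt_le_trans hn _.
  rewrite -natrX ler_nat; apply: leq_trans (ltnW (ltn_expl n (isT : (1 < 4)%N))) _.
  by rewrite leq_exp2l.
move: h4; set k := m.+1 => h4; have hk : k = m.+1 by []; clearbody k.
have [B [Bp hB]] : exists B : R, 0 < B /\ B = (4 * c4) ^+ k * k`!%:R.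
  by exists ((4 * c4) ^+ k * k`!%:R); split => //; rewrite mulr_gt0 ?exprn_gt0 ?mulr_gt0// ltr0n fact_gt0.
exists (c3 * (1 + B)); split; first by rewrite mulr_gt0// addr_gt0.
case => [|j'].
  by rewrite /cj /= !expr0 !mulr1 ler_pMr// lerDl ltW.
have [q [qp qE]] : exists q : R, 0 < q /\ q = 4 ^+ j' by exists (4 ^+ j'); rewrite exprn_gt0.
have [t [tp tE]] : exists t : R, 0 < t /\ t = q / c4 by exists (q / c4); rewrite divr_gt0.
have ht : t ^+ k <= k`!%:R * expR t.
  have := expR_ge1Dxn m (ltW tp); rewrite -hk.
  move=> h; rewrite mulrC -ler_pdivrMr ?ltr0n ?fact_gt0//.
  by apply: le_trans h; rewrite lerDr.
have hq : (4 ^+ k) ^+ j'.+1 = 4 ^+ k * (c4 ^+ k * t ^+ k).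
  rewrite tE exprMn exprVn [X in _ = _ * X]mulrCA divff ?mulr1; last first.
    by apply: expf_neq0; rewrite gt_eqF.
  by rewrite qE exprS -!exprM mulnC.
have h2D : (2 * D) ^+ j'.+1 <= B * expR t.
  apply: le_trans (_ : (4 ^+ k) ^+ j'.+1 <= _).
    by apply: lerXn2r => //; rewrite nnegrE ?exprn_ge0 // mulr_ge0 // ltW.
  rewrite hq hB exprMn -!mulrA ler_pM2l ?exprn_gt0// ler_pM2l ?exprn_gt0//.
have wj : ww j'.+1 = (expR t)^-1 by rewrite /ww -expRN tE qE natrX mulNr.
rewrite /cj wj -mulrA -mulrA ler_pM2l//.
rewrite -exprMn (mulrC D) ler_pdivrMl ?expR_gt0//.
apply: le_trans h2D _; rewrite mulrC ler_pM2l ?expR_gt0//.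
by rewrite lerDr ler01.
Qed.

Lemma cj_sum : exists S : R, 0 < S /\ (\esum_(j in [set: nat]) (cj j)%:E <= S%:E)%E.
Proof.
have [A [Ap hA]] := cj_geo.
exists (2 * A); split; first by rewrite mulr_gt0.
rewrite -nneseries_esumT; last by move=> j; rewrite lee_fin ltW ?cj_gt0.
apply: lime_le; first by apply: is_cvg_nneseries => j _ _; rewrite lee_fin ltW ?cj_gt0.
apply: nearW => N; rewrite sumEFin lee_fin big_mkord.
apply: (@le_trans _ _ (\sum_(i < N) A * (2^-1) ^+ i)).
  apply: ler_sum => i _; rewrite exprVn ler_pdivlMr ?exprn_gt0//; exact: hA.
by rewrite -mulr_sumr mulrC ler_pM2r// geo_le.
Qed.

Local Notation iW n := (invW adj pi K x (sq n)).

Lemma vol_dG_fin n : vol pi (Gb x (sq n) `&` dGamma adj K) =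
  (fine (vol pi (Gb x (sq n) `&` dGamma adj K)))%:E.
Proof.
have h0 := vol_ge0 hw (Gb x (sq n) `&` dGamma adj K).
have h1 : (vol pi (Gb x (sq n) `&` dGamma adj K) <= (Vb x (sq n))%:E)%E.
  rewrite -(proj2 (hVb x n)); apply: esum_le_subset; first by move=> y [].
  by move=> y _; rewrite lee_fin ltW ?(piv_gt0 hw).
rewrite fineK// fin_numE; apply/andP; split.
  by apply/eqP => h; move: h0; rewrite h.
by apply/eqP => h; move: h1; rewrite h leye_eq.
Qed.

Lemma iW_ge0 n : 0 <= iW n.
Proof.
rewrite /invW; apply: divr_ge0; first by apply: fine_ge0; apply: esum_ge0 => y _; rewrite lee_fin ltW ?(piv_gt0 hw).
exact: ltW (proj1 (hVb x n)).
Qed.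

Lemma sum_y j i : (\esum_(y in dGamma adj K) Tt j i y = (cj j * iW (4 ^ j * i)%N)%:E)%E.
Proof.
rewrite /Tt esumZl; last 2 first.
- by rewrite divr_ge0 ?ltW ?cj_gt0 ?(proj1 (hVb _ _)).
- by move=> y _; case: ifP => _ //; rewrite lee_fin ltW ?(piv_gt0 hw).
rewrite -esum_mkcondl -/(vol pi _) vol_dG_fin -EFinM /invW.
by rewrite mulrA mulrAC.
Qed.

Definition WW := (\esum_(n in [set: nat]) (iW n)%:E)%E.

Lemma sum_i j : (\esum_(i in [set: nat]) (cj j * iW (4 ^ j * i)%N)%:E <= (cj j)%:E * WW)%E.
Proof.
under eq_esum do rewrite EFinM.
rewrite (@esumZl _ _ _ _ _ (ltW (cj_gt0 j))); last by move=> i _; rewrite lee_fin iW_ge0.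
apply: lee_wpmul2l; first by rewrite lee_fin ltW ?cj_gt0.
rewrite -(esum_image [set: nat] (fun i => (4 ^ j * i)%N) (fun n => (iW n)%:E)).
  by apply: esum_le_subset => // n _; rewrite lee_fin iW_ge0.
by move=> a b _ _ /eqP; rewrite eqn_pmul2l ?expn_gt0// => /eqP.
Qed.

Lemma G_sum : (\esum_(i in [set: nat]) \esum_(y in dGamma adj K) Kp i x y <=
  \esum_(j in [set: nat]) ((cj j)%:E * WW))%E.
Proof.
apply: (@le_trans _ _ (\esum_(i in [set: nat]) \esum_(y in dGamma adj K)
   \esum_(j in [set: nat]) Tt j i y)%E).
  by apply: le_esum => i _; apply: le_esum => y hy; exact: Kp_bound.
apply: (@le_trans _ _ (\esum_(i in [set: nat]) \esum_(j in [set: nat])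
   (cj j * iW (4 ^ j * i)%N)%:E)%E).
  apply: le_esum => i _; rewrite esum_swap; last by move=> *; exact: Tt_ge0.
  by apply: le_esum => j _; rewrite sum_y.
rewrite esum_swap; last by move=> *; rewrite lee_fin mulr_ge0 ?iW_ge0 ?ltW ?cj_gt0.
by apply: le_esum => j _; exact: sum_i.
Qed.

Lemma iW_zero n : (n < distK adj K x ^ 2)%N -> iW n = 0.
Proof.
move=> hn; rewrite /invW /vol esum1 ?mul0r//.
move=> y [hb [Ky _]]; exfalso.
have := distK_le adj x Ky; move: hb; rewrite /gball /= nat_le_sqrt => hg hd.
have : (distK adj K x * distK adj K x <= n)%N.
  by apply: leq_trans hg; apply: leq_mul.
have e2 : (distK adj K x ^ 2 = distK adj K x * distK adj K x)%N by rewrite expnS expn1.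
by rewrite leqNgt -e2 hn.
Qed.

Lemma WW_eq : (\sum_((distK adj K x ^ 2)%N <= n <oo) (iW n)%:E = WW)%E.
Proof.
rewrite eseries_cond nneseries_esum; last by move=> *; rewrite lee_fin iW_ge0.
rewrite /WW (esumID [set n | (distK adj K x ^ 2 <= n)%N] [set: nat]); last first.
  by move=> *; rewrite lee_fin iW_ge0.
rewrite [X in (_ + X)%E]esum1 ?adde0; last first.
  by move=> n [_ /= hn]; rewrite iW_zero// ltnNge; apply/negP.
by rewrite setTI.
Qed.

Lemma psi_bound S : 0 < S ->
  (\esum_(j in [set: nat]) (cj j)%:E <= S%:E)%E ->
  (psiK adj mu pi K x <= \sum_((distK adj K x ^ 2)%N <= n <oo) (S * iW n)%:E)%E.
Proof.
move=> Sp hS.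
have -> : (\sum_((distK adj K x ^ 2)%N <= n <oo) (S * iW n)%:E =
    S%:E * \sum_((distK adj K x ^ 2)%N <= n <oo) (iW n)%:E)%E.
  rewrite -nneseriesZl; last by move=> *; rewrite lee_fin iW_ge0.
  by apply: eq_eseriesr => n _; rewrite EFinM.
rewrite WW_eq.
apply: (@le_trans _ _ (\esum_(i in [set: nat]) \esum_(y in dGamma adj K) Kp i x y)%E).
  apply: ge_ereal_sup => _ [n _ <-].
  rewrite (hit_seq adj mu pi K x n); apply: le_trans (hit_bound hw hc hl hxK n) _.
  rewrite -nneseries_esumT; last by move=> i; apply: esum_ge0 => *; exact: Kp_ge0 hw hc hl _ _ _.
  rewrite -(big_mkord xpredT (fun i => \esum_(y in dGamma adj K) Kp i x y)%E).
  apply: nneseries_lim_ge => i _ _; apply: esum_ge0 => *; exact: Kp_ge0 hw hc hl _ _ _.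
apply: le_trans G_sum _.
have W0 : (0 <= WW)%E by apply: esum_ge0 => *; rewrite lee_fin iW_ge0.
have [Wf|Wnf] := boolP (WW \is a fin_num).
  have fW : 0 <= fine WW by rewrite fine_ge0.
  rewrite -(fineK Wf) (@esumZr _ _ _ _ _ fW); last by move=> *; rewrite lee_fin ltW ?cj_gt0.
  by apply: lee_wpmul2r => //; rewrite lee_fin.
have -> : WW = +oo%E.
  by move: Wnf W0; case: (WW) => //.
by rewrite mulry gtr0_sg// mul1e leey.
Qed.

End Main.

Unset Implicit Arguments.

Theorem theorem2p9 (R : realType) (V : choiceType)
  (adj : V -> V -> Prop) (mu : V -> V -> R) (pi : V -> R) :
  weighted_graph adj mu pi ->
  controlled_weights adj mu pi ->
  uniformly_lazy adj mu pi ->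
  harnack_graph adj mu pi ->
  forall K : set V,
  exists C : R,
  forall x : V, ~ K x -> ~ dIGamma adj K x ->
    (psiK adj mu pi K x <=
     \sum_((distK adj K x ^ 2)%N <= n <oo) (C * invW adj pi K x (Num.sqrt n%:R))%:E)%E.
Proof.
move=> hw hc hl hh K.
have [c1 [c2 [c3 [c4 [c1p c2p c3p c4p h]]]]] := hh.
have [D [Dp hD]] := doubling hw hc hl hh.
have [S [Sp hS]] := cj_sum c3p c4p Dp.
exists S => x hxK hxI.
apply: (psi_bound hw hc hl c3p c4p Dp _ hD (Vb_pos hw hc hl hh) hxK hxI Sp hS).
by move=> n y z hg; case: (h n y z hg).
Qed.
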